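(* Let $\Sigma$ be the discrete-time LTI system $x_{k+1}=Ax_k+Bu_k$, $y_k=Cx_k+Du_k$ with $A\in\mathbb{R}^{n_x\times n_x}$, $B\in\mathbb{R}^{n_x\times n_u}$, $C\in\mathbb{R}^{n_y\times n_x}$, $D\in\mathbb{R}^{n_y\times n_u}$ and $(A,B)$ controllable. Let $Q,M,L\in\mathbb{N}_{\geqslant 1}$, let $\bm{\omega}=(\omega_0,\dots,\omega_{M-1})$ with $\omega_m\in[0,\pi)$, and let $\{U^{i}(\omega),X^{i}(\omega),Y^{i}(\omega)\}$, $i\in\{1,\dots,Q\}$, be $Q$ input-state-output spectra of $\Sigma$. Define the samples $U^{i}_m=U^{i}(\omega_m)$, $X^{i}_m=X^{i}(\omega_m)$, $Y^{i}_m=Y^{i}(\omega_m)$ for $m\in\{0,\dots,M-1\}$, and the sequences $\bm{U}^i=(U^i_0,\dots,U^i_{M-1})$, $\bm{X}^i=(X^i_0,\dots,X^i_{M-1})$. Suppose that $\bm{U}^{i}$, $i\in\{1,\dots,Q\}$, are collectively persistently exciting (CPE) of order $L+n_x$. Then the complex matrix $$\begin{bmatrix} F_1(\bm{X}^{1},\bm{\omega}) & \cdots & F_1(\bm{X}^{Q},\bm{\omega}) & F_1^*(\bm{X}^{1},\bm{\omega}) & \cdots & F_1^*(\bm{X}^{Q},\bm{\omega})\\ F_L(\bm{U}^{1},\bm{\omega}) & \cdots & F_L(\bm{U}^{Q},\bm{\omega}) & F_L^*(\bm{U}^{1},\bm{\omega}) & \cdots & F_L^*(\bm{U}^{Q},\bm{\omega})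 \end{bmatrix}$$ has full row rank $n_x+Ln_u$; equivalently, the real matrix $$\Lambda=\operatorname{Re}\left(\begin{bmatrix} F_1(\bm{X}^{1},\bm{\omega}) & \cdots & F_1(\bm{X}^{Q},\bm{\omega})\\ F_L(\bm{U}^{1},\bm{\omega}) & \cdots & F_L(\bm{U}^{Q},\bm{\omega}) \end{bmatrix}\begin{bmatrix} F_1(\bm{X}^{1},\bm{\omega}) & \cdots & F_1(\bm{X}^{Q},\bm{\omega})\\ F_L(\bm{U}^{1},\bm{\omega}) & \cdots & F_L(\bm{U}^{Q},\bm{\omega}) \end{bmatrix}^{\mathsf{H}}\right)$$ is positive definite.
   Context: $j=\sqrt{-1}$; $^*$ denotes entrywise complex conjugation and $^{\mathsf{H}}$ conjugate transpose; $\otimes$ is the Kronecker product. $\mathbb{W}=[-\pi,\pi)$. Spectra: a spectrum is a function $V:\mathbb{W}\to\mathbb{C}^{n}$ satisfying the symmetry $V(\omega)=V^*(-\omega)$ for all $\omega\in\mathbb{W}$. A triple of spectra $\{U(\omega),X(\omega),Y(\omega)\}$ (with values in $\mathbb{C}^{n_u},\mathbb{C}^{n_x},\mathbb{C}^{n_y}$, each symmetric) is an input-state-output spectrum of $\Sigma$ if for all $\omega\in\mathbb{W}$: $e^{j\omega}X(\omega)=AX(\omega)+BU(\omega)$ and $Y(\omega)=CX(\omega)+DU(\omega)$. A pair $\{U(\omega),Y(\omega)\}$ of symmetric spectra is an input-output spectrum of $\Sigma$ if there is a symmetric spectrum $X(\omega)$ making $\{U,X,Y\}$ an input-state-output spectrum.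 For $L\geqslant 1$ and $\omega\in\mathbb{R}$, $W_L(\omega)=\begin{bmatrix}1 & e^{j\omega} & \cdots & e^{j\omega(L-1)}\end{bmatrix}^\top\in\mathbb{C}^{L}$. For a sequence $\bm{V}=(V_0,\dots,V_{M-1})$ with $V_m\in\mathbb{C}^{n_v}$ and frequencies $\bm{\omega}=(\omega_0,\dots,\omega_{M-1})$, $F_L(\bm{V},\bm{\omega})=\begin{bmatrix}W_L(\omega_0)\otimes V_0 & \cdots & W_L(\omega_{M-1})\otimes V_{M-1}\end{bmatrix}\in\mathbb{C}^{n_vL\times M}$. Frequency-domain CPE: sequences $\bm{V}^i\in(\mathbb{C}^{n_v})^M$, $i=1,\dots,Q$, consisting of samples $V^i_m=V^i(\omega_m)$ of symmetric spectra $V^i$ at frequencies $\omega_m\in[0,\pi)$, are called collectively persistently exciting of order $L$ if the matrix $\begin{bmatrix}F_L(\bm{V}^{1},\bm{\omega}) & \cdots & F_L(\bm{V}^{Q},\bm{\omega}) & F_L^*(\bm{V}^{1},\bm{\omega}) & \cdots & F_L^*(\bm{V}^{Q},\bm{\omega})\end{bmatrix}$ has full row rank $n_vL$ (equivalently, $\operatorname{Re}\sum_{m}W_L(\omega_m)W_L(\omega_m)^{\mathsf{H}}\otimes\sum_i V^i_m(V^i_m)^{\mathsf{H}}\succ 0$). *)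

(* Defs.v *)
From HB Require Import structures.
From mathcomp Require Import all_boot all_order all_algebra.
From mathcomp Require Import complex mxtens.
From mathcomp Require Import reals trigo.

Set Implicit Arguments.
Unset Strict Implicit.
Unset Printing Implicit Defensive.

Import Order.TTheory GRing.Theory Num.Theory.
Local Open Scope ring_scope.

Section Defs.
Variable R : realType.
Local Notation C := R[i].

Definition expj (w : R) : C := Complex (cos w) (sin w).

Definition cmx m n (A : 'M[R]_(m, n)) : 'M[C]_(m, n) := map_mx (fun r => r%:C%C) A.

Definition mxconj m n (A : 'M[C]_(m, n)) : 'M[C]_(m, n) := map_mx (@conjc R) A.

Definition Remx m n (A : 'M[C]_(m, n)) : 'M[R]_(m, n) := map_mx (@complex.Re R) A.

Definition ctrmx m n (A : 'M[C]_(m, n)) : 'M[C]_(n, m) := (mxconj A)^T.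

Definition inW (w : R) : Prop := - pi <= w /\ w < pi.

(* a spectrum V : W -> C^n with V(w) = V^*(-w); spectra are represented as
   functions on R whose values outside W are irrelevant *)
Definition symmetric_spectrum n (V : R -> 'cV[C]_n) : Prop :=
  forall w, inW w -> inW (- w) -> V w = mxconj (V (- w)).

Definition isos_spectrum nx nu ny
  (A : 'M[R]_(nx, nx)) (B : 'M[R]_(nx, nu)) (Cm : 'M[R]_(ny, nx)) (D : 'M[R]_(ny, nu))
  (U : R -> 'cV[C]_nu) (X : R -> 'cV[C]_nx) (Y : R -> 'cV[C]_ny) : Prop :=
  [/\ symmetric_spectrum U, symmetric_spectrum X, symmetric_spectrum Y &
      forall w, inW w ->
        expj w *: X w = cmx A *m X w + cmx B *m U w /\
        Y w = cmx Cm *m X w + cmx D *m U w].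

Definition ctrb_mx nx nu (A : 'M[R]_(nx, nx)) (B : 'M[R]_(nx, nu)) :=
  \mxrow_(k < nx) (A ^+ k *m B).

Definition controllable nx nu (A : 'M[R]_(nx, nx)) (B : 'M[R]_(nx, nu)) : Prop :=
  \rank (ctrb_mx A B) = nx.

Definition WL (L : nat) (w : R) : 'cV[C]_L := \col_(l < L) expj (w * l%:R).

Definition FL (L nv M : nat) (V : 'I_M -> 'cV[C]_nv) (om : 'I_M -> R)
  : 'M[C]_(L * nv, M) :=
  \matrix_(r, m) (WL L (om m) *t V m) r ord0.

Definition FLblk (L nv M Q : nat) (V : 'I_Q -> 'I_M -> 'cV[C]_nv) (om : 'I_M -> R) :=
  \mxrow_(i < Q) FL L (V i) om.

Definition CPE (L nv M Q : nat) (V : 'I_Q -> 'I_M -> 'cV[C]_nv) (om : 'I_M -> R) : Prop :=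
  \rank (row_mx (FLblk L V om) (mxconj (FLblk L V om))) = (nv * L)%N.

Definition posdef n (P : 'M[R]_n) : Prop :=
  P^T = P /\ forall x : 'cV[R]_n, x != 0 -> 0 < (x^T *m P *m x) ord0 ord0.

End Defs.

(* Main.v *)
Require Import Defs.
From HB Require Import structures.
From mathcomp Require Import all_boot all_order all_algebra.
From mathcomp Require Import complex mxtens.
From mathcomp Require Import reals trigo.
From mathcomp Require Import zify ring.

Set Implicit Arguments.
Unset Strict Implicit.
Unset Printing Implicit Defensive.

Import Order.TTheory GRing.Theory Num.Theory.
Local Open Scope ring_scope.

Section CoreS.
Variable F : fieldType.

Definition dot n (r : 'rV[F]_n) (c : 'cV[F]_n) : F := (r *m c) 0 0.

Lemma dotDl n (r1 r2 : 'rV[F]_n) c : dot (r1 + r2) c = dot r1 c + dot r2 c.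
Proof. by rewrite /dot mulmxDl mxE. Qed.
Lemma dotDr n (r : 'rV[F]_n) c1 c2 : dot r (c1 + c2) = dot r c1 + dot r c2.
Proof. by rewrite /dot mulmxDr mxE. Qed.
Lemma dotZl n a (r : 'rV[F]_n) c : dot (a *: r) c = a * dot r c.
Proof. by rewrite /dot -scalemxAl mxE. Qed.
Lemma dotZr n a (r : 'rV[F]_n) c : dot r (a *: c) = a * dot r c.
Proof. by rewrite /dot -scalemxAr mxE. Qed.
Lemma dot0l n (c : 'cV[F]_n) : dot 0 c = 0.
Proof. by rewrite /dot mul0mx mxE. Qed.
Lemma dotA n m (r : 'rV[F]_n) (M : 'M[F]_(n, m)) c : dot (r *m M) c = dot r (M *m c).
Proof. by rewrite /dot mulmxA. Qed.
Lemma dot_suml n I (s : seq I) P (f : I -> 'rV[F]_n) c :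
  dot (\sum_(i <- s | P i) f i) c = \sum_(i <- s | P i) dot (f i) c.
Proof.
elim/big_rec2: _ => [|i x y _ <-]; first by rewrite dot0l.
by rewrite dotDl.
Qed.

Lemma CH_exists (n : nat) (A : 'M[F]_n) :
  exists al : nat -> F, al n = 1 /\ \sum_(0 <= j < n.+1) al j *: A ^+ j = 0.
Proof.
case: n A => [|n] A.
  by exists (fun _ => 1); split=> //; apply/matrixP => [[]].
exists (fun j => (char_poly A)`_j); split.
  by have := char_poly_monic A; rewrite monicE lead_coefE size_char_poly => /eqP.
have := Cayley_Hamilton A; rewrite /horner_mx /horner_morph.
rewrite (@horner_coef_wide _ n.+2) ?size_map_poly ?size_char_poly // => CH.
rewrite -[RHS]CH big_mkord; apply: eq_bigr => i _.
by rewrite coef_map /= -mul_scalar_mx.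
Qed.

Variables (nx nu : nat) (A : 'M[F]_nx) (B : 'M[F]_(nx, nu)).
Variable Ok : F -> 'cV[F]_nx -> 'cV[F]_nu -> Prop.
Variable N : nat.
Hypothesis HOk : forall z x u, Ok z x u -> z *: x = A *m x + B *m u.

Definition ev (K : nat) (e : nat -> 'rV[F]_nu) z u :=
  \sum_(0 <= p < K) z ^+ p * dot (e p) u.

Hypothesis HK : forall e, (forall z x u, Ok z x u -> ev N e z u = 0) ->
  forall p, (p < N)%N -> e p = 0.

Lemma shift z x u (xi : 'rV[F]_nx) j : Ok z x u ->
  z ^+ j * dot xi x = dot (xi *m A ^+ j) x +
     \sum_(0 <= i < j) z ^+ i * dot (xi *m A ^+ (j - i.+1) *m B) u.
Proof.
move=> /HOk Hzx; elim: j xi => [|j IH] xi.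
  by rewrite expr0 mul1r big_geq // addr0 mulmx1.
rewrite exprSr -mulrA -dotZr Hzx dotDr -dotA -dotA.
rewrite mulrDr IH big_nat_recr //= subSS subnn expr0 mulmx1 -addrA; congr (_ + _).
  by rewrite exprS mulmxA.
congr (_ + _); apply: eq_big_nat => i /andP[_ lij].
by rewrite subSS -(subnSK lij) exprS !mulmxA.
Qed.

Lemma eta_zero L' (xi : 'rV[F]_nx) (eta : nat -> 'rV[F]_nu) :
  (L' + nx <= N)%N ->
  (forall l, (L' <= l)%N -> eta l = 0) ->
  (forall z x u, Ok z x u -> dot xi x + ev L' eta z u = 0) ->
  forall l, eta l = 0.
Proof.
move=> hN heta hker.
have [al [al1 alA]] := CH_exists A.
pose g j p := if (j <= p)%N then eta (p - j)%N else xi *m A ^+ (j - p.+1)%N *m B.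
pose c p := \sum_(0 <= j < nx.+1) al j *: g j p.
have c0 : forall p, (p < N)%N -> c p = 0.
  apply: HK => z x u hO.
  have inner : forall j, (j <= nx)%N ->
      \sum_(0 <= p < N) z ^+ p * dot (g j p) u = - dot (xi *m A ^+ j) x.
    move=> j hj.
    rewrite (@big_cat_nat _ _ _ j) //=; last by lia.
    rewrite (@eq_big_nat _ _ _ 0 j _ (fun p => z ^+ p * dot (xi *m A ^+ (j - p.+1)%N *m B) u));
      last by move=> p /andP[_ hp]; rewrite /g ifF //; lia.
    rewrite -[X in \sum_(X <= _ < N) _](add0n j) big_addn.
    rewrite (@eq_big_nat _ _ _ 0 (N - j)%N _ (fun p => z ^+ j * (z ^+ p * dot (eta p) u)));
      last by move=> p _; rewrite /g ifT ?addnK ?exprD 1?mulrCA ?mulrA //; lia.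
    rewrite -mulr_sumr [\sum_(0 <= i < (N - j)%N) _](@big_cat_nat _ _ _ L') //=; last by lia.
    rewrite [X in _ + _ * (_ + X)]big_nat_cond [X in _ + _ * (_ + X)]big1 ?addr0; last first.
      by move=> p /andP[/andP[hp _] _]; rewrite heta ?dot0l ?mulr0.
    have := shift xi j hO => /(congr1 (fun t => t - dot (xi *m A ^+ j) x)).
    rewrite addrAC subrr add0r => <-.
    have := hker _ _ _ hO => /(congr1 (fun t => z ^+ j * t)).
    rewrite mulr0 mulrDr /ev => H.
    by rewrite addrAC H add0r.
  rewrite /ev.
  under eq_bigr do rewrite /c dot_suml mulr_sumr.
  rewrite exchange_big /=.
  rewrite (@eq_big_nat _ _ _ 0 nx.+1 _ (fun j => al j * - dot (xi *m A ^+ j) x)); last first.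
    move=> j /andP[_ hj]; rewrite -inner // mulr_sumr; apply: eq_bigr => p _.
    by rewrite dotZl mulrCA.
  under eq_bigr do rewrite mulrN -dotZl.
  rewrite sumrN.
  rewrite -dot_suml; under eq_bigr do rewrite scalemxAr.
  by rewrite -mulmx_sumr alA mulmx0 dot0l oppr0.
have top : forall d, (d < L')%N -> (forall l, (d < l)%N -> eta l = 0) -> eta d = 0.
  move=> d hd hgt; have := c0 (nx + d)%N; rewrite /c big_nat_recr //= /g.
  rewrite leq_addr addKn al1 scale1r big_nat_cond big1 ?add0r; first by apply; lia.
  by move=> j /andP[/andP[_ hj] _]; rewrite ifT ?hgt ?scaler0 //; lia.
have H : forall k l, (L' - k <= l)%N -> eta l = 0.
  elim=> [|k IH] l hl; first by apply: heta; rewrite subn0 in hl.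
  case: (leqP (L' - k) l) => h; first exact: IH.
  apply: top; first by lia.
  by move=> l' hl''; apply: IH; lia.
by move=> l; apply: (H L'%N); lia.
Qed.

Lemma xi_step (xi : 'rV[F]_nx) : (1 + nx <= N)%N ->
  (forall z x u, Ok z x u -> dot xi x = 0) ->
  xi *m B = 0 /\ (forall z x u, Ok z x u -> dot (xi *m A) x = 0).
Proof.
move=> hN hx.
have key : forall z x u, Ok z x u -> dot (xi *m A) x + dot (xi *m B) u = 0.
  move=> z x u hO; have := hx _ _ _ hO.
  move=> /(congr1 (fun t => z * t)); rewrite mulr0 -dotZr (HOk hO) dotDr -!dotA.
  by move->.
pose eta l := if l == 0%N then xi *m B else 0.
have := @eta_zero 1 (xi *m A) eta hN.
have h1 : forall l, (1 <= l)%N -> eta l = 0 by case.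
move=> /(_ h1) H.
have e0 : xi *m B = 0.
  have := H _ 0%N; apply => z x u hO.
  by rewrite /ev big_nat1 expr0 mul1r (key _ _ _ hO).
split=> // z x u hO; have := key _ _ _ hO.
by rewrite e0 dot0l addr0.
Qed.

Lemma xi_zero (xi : 'rV[F]_nx) : (1 + nx <= N)%N ->
  (forall z x u, Ok z x u -> dot xi x = 0) -> forall k, xi *m A ^+ k *m B = 0.
Proof.
move=> hN hx k; elim: k xi hx => [|k IH] xi hx.
  by rewrite expr0 mulmx1; case: (xi_step hN hx).
rewrite exprS mulmxA; apply: IH.
by case: (xi_step hN hx).
Qed.

Lemma core_main L (xi : 'rV[F]_nx) (eta : nat -> 'rV[F]_nu) :
  (1 <= L)%N -> (L + nx <= N)%N ->
  (forall l, (L <= l)%N -> eta l = 0) ->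
  (forall z x u, Ok z x u -> dot xi x + ev L eta z u = 0) ->
  (forall l, eta l = 0) /\ (forall k, xi *m A ^+ k *m B = 0).
Proof.
move=> hL hN heta hker.
have E := eta_zero hN heta hker; split=> //.
apply: xi_zero; first by apply: leq_trans hN; rewrite leq_add2r.
move=> z x u hO; have := hker _ _ _ hO.
rewrite /ev big_nat_cond big1 ?addr0 // => p _.
by rewrite E dot0l mulr0.
Qed.

End CoreS.

Section Conc.
Variable R : realType.
Local Notation C := R[i].

Lemma expjD (a b : R) : expj (a + b) = expj a * expj b.
Proof. by rewrite /expj cosD sinD; simpc; congr Complex; ring. Qed.

Lemma expj_nat (w : R) l : expj (w * l%:R) = expj w ^+ l.
Proof.
elim: l => [|l IH]; first by rewrite mulr0 /expj cos0 sin0 expr0.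
by rewrite mulrS mulrDr mulr1 expjD IH exprS.
Qed.

Lemma Re_mulJ (x y : C) : complex.Re (x * y^*%C) = complex.Re (y * x^*%C).
Proof. case: x y => [a b] [c d]; simpc => /=; ring. Qed.

Lemma Re_mulrC (r : R) (x : C) : complex.Re (r%:C%C * x) = r * complex.Re x.
Proof. case: x => [a b]; simpc => /=; ring. Qed.

Lemma Re_mulJJ (x : C) : complex.Re (x * x^*%C) = complex.Re x ^+ 2 + complex.Im x ^+ 2.
Proof. by case: x => [a b]; simpc => /=; ring. Qed.


Definition blk N n (v : 'rV[C]_(N * n)) (l : nat) : 'rV[C]_n :=
  if insub l is Some o then \row_k v 0 (mxtens_index (o, k)) else 0.

Lemma blkE N n (v : 'rV[C]_(N * n)) (o : 'I_N) :
  blk v o = \row_k v 0 (mxtens_index (o, k)).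
Proof. by rewrite /blk valK. Qed.

Lemma blk_out N n (v : 'rV[C]_(N * n)) l : (N <= l)%N -> blk v l = 0.
Proof. by move=> h; rewrite /blk insubN // -leqNgt. Qed.

Lemma blk_eq0 N n (v : 'rV[C]_(N * n)) : (forall l, blk v l = 0) -> v = 0.
Proof.
move=> H; apply/matrixP => a r; rewrite (ord1 a); case: (mxtens_indexP r) => o k.
by have := congr1 (fun M : 'rV_n => M 0 k) (H o); rewrite blkE !mxE.
Qed.

Lemma sum_tens N n (F : 'I_(N * n) -> C) :
  \sum_r F r = \sum_(l < N) \sum_(k < n) F (mxtens_index (l, k)).
Proof.
rewrite pair_big (reindex (@mxtens_index N n)) /=.
  by apply: eq_bigr => -[l k].
by exists (@mxtens_unindex N n) => x _; rewrite ?mxtens_indexK ?mxtens_unindexK.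
Qed.

Lemma FL_mul L nv M (V : 'I_M -> 'cV[C]_nv) om (v : 'rV[C]_(L * nv)) m :
  (v *m FL L V om) 0 m = \sum_(l < L) expj (om m) ^+ l * dot (blk v l) (V m).
Proof.
rewrite mxE sum_tens; apply: eq_bigr => l _.
rewrite /dot mxE mulr_sumr; apply: eq_bigr => k _.
rewrite blkE !mxE !mxtens_indexK /= (ord1 (Ordinal _)).
by rewrite expj_nat mulrCA.
Qed.

Lemma FLc_mul L nv M (V : 'I_M -> 'cV[C]_nv) om (v : 'rV[C]_(L * nv)) m :
  (v *m mxconj (FL L V om)) 0 m =
  \sum_(l < L) ((expj (om m))^*%C) ^+ l * dot (blk v l) (mxconj (V m)).
Proof.
rewrite mxE sum_tens; apply: eq_bigr => l _.
rewrite /dot mxE mulr_sumr; apply: eq_bigr => k _.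
rewrite blkE !mxE !mxtens_indexK /= (ord1 (Ordinal _)).
by rewrite expj_nat rmorphM rmorphXn mulrCA.
Qed.

Lemma conj_cmx m n (M : 'M[R]_(m, n)) : mxconj (cmx M) = cmx M.
Proof. by apply/matrixP => i j; rewrite !mxE conjc_real. Qed.

Lemma map_mxrow_gen (f : C -> C) m q (q_ : 'I_q -> nat) (B_ : forall j, 'M[C]_(m, q_ j)) :
  map_mx f (\mxrow_j B_ j) = \mxrow_j (map_mx f (B_ j)).
Proof. by apply/matrixP => i k; rewrite !mxE. Qed.

Lemma mxconj_mxrow m q (q_ : 'I_q -> nat) (B_ : forall j, 'M[C]_(m, q_ j)) :
  mxconj (\mxrow_j B_ j) = \mxrow_j (mxconj (B_ j)).
Proof. exact: map_mxrow_gen. Qed.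

Lemma map_mxrow_RC (f : R -> C) m q (q_ : 'I_q -> nat) (B_ : forall j, 'M[R]_(m, q_ j)) :
  map_mx f (\mxrow_j B_ j) = \mxrow_j (map_mx f (B_ j)).
Proof. by apply/matrixP => i k; rewrite !mxE. Qed.

Lemma cmxM m n p (M1 : 'M[R]_(m, n)) (M2 : 'M[R]_(n, p)) : cmx (M1 *m M2) = cmx M1 *m cmx M2.
Proof. exact: (map_mxM (real_complex R)). Qed.

Lemma cmxX n (M1 : 'M[R]_n) k : cmx (M1 ^+ k) = cmx M1 ^+ k.
Proof.
elim: k => [|k IH]; first by apply/matrixP => i j; rewrite !mxE; case: (i == j).
by rewrite !exprS -IH; exact: cmxM.
Qed.

Lemma blk0 N n l : blk (0 : 'rV[C]_(N * n)) l = 0.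
Proof. by rewrite /blk; case: insub => // o; apply/rowP => k; rewrite !mxE. Qed.

Lemma rank_of_ker m n (K : 'M[C]_(m, n)) :
  (forall w : 'rV_m, w *m K = 0 -> w = 0) -> \rank K = m.
Proof.
move=> H; apply/eqP; rewrite -/(row_free K) -kermx_eq0; apply/eqP.
apply/row_matrixP => r; rewrite row0; apply: H.
by rewrite -row_mul mulmx_ker row0.
Qed.

Lemma Re_conj (z : C) : complex.Re (z^*%C) = complex.Re z.
Proof. by case: z. Qed.

Lemma Re_sum I (r : seq I) (P : pred I) (f : I -> C) :
  complex.Re (\sum_(i <- r | P i) f i) = \sum_(i <- r | P i) complex.Re (f i).
Proof. by elim/big_rec2: _ => // i a b _ <-; case: (f i); case: b. Qed.

Lemma sq_pos (z : C) : z != 0 -> 0 < complex.Re z ^+ 2 + complex.Im z ^+ 2.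
Proof.
case: z => a b hz /=; rewrite lt_neqAle addr_ge0 ?sqr_ge0 // andbT eq_sym.
rewrite paddr_eq0 ?sqr_ge0 // !sqrf_eq0; apply: contra hz => /andP[/eqP -> /eqP ->].
by [].
Qed.

Lemma Remx_quad n (x : 'cV[R]_n) (P : 'M[C]_n) :
  (x^T *m Remx P *m x) 0 0 = complex.Re (((cmx x)^T *m P *m cmx x) 0 0).
Proof.
rewrite !mxE [RHS](Re_sum (index_enum _)); apply: eq_bigr => j _.
rewrite !mxE mulr_suml [in RHS]mulr_suml [RHS](Re_sum (index_enum _)).
apply: eq_bigr => k _; rewrite !mxE.
by case: (P k j) => a b; simpc => /=; ring.
Qed.

End Conc.

Theorem lemma2 (R : realType) (nx nu ny : nat)
  (A : 'M[R]_(nx, nx)) (B : 'M[R]_(nx, nu)) (Cm : 'M[R]_(ny, nx)) (D : 'M[R]_(ny, nu))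
  (Q M L : nat) (om : 'I_M -> R)
  (U : 'I_Q -> R -> 'cV[R[i]]_nu) (X : 'I_Q -> R -> 'cV[R[i]]_nx)
  (Y : 'I_Q -> R -> 'cV[R[i]]_ny) :
  controllable A B ->
  (1 <= Q)%N -> (1 <= M)%N -> (1 <= L)%N ->
  (forall m, 0 <= om m /\ om m < pi) ->
  (forall i, isos_spectrum A B Cm D (U i) (X i) (Y i)) ->
  CPE (L + nx) (fun i m => U i (om m)) om ->
  let G := col_mx (FLblk 1 (fun i m => X i (om m)) om)
                  (FLblk L (fun i m => U i (om m)) om) in
  \rank (row_mx G (mxconj G)) = (nx + L * nu)%N /\
  posdef (Remx (G *m ctrmx G)).
Proof.
move=> hctrb hQ hM hL hom hsys hcpe G.
pose e m := expj (om m).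
pose Ok (z : R[i]) (x : 'cV[R[i]]_nx) (u : 'cV[R[i]]_nu) := exists i m,
  (z = e m /\ x = X i (om m) /\ u = U i (om m)) \/
  (z = (e m)^*%C /\ x = mxconj (X i (om m)) /\ u = mxconj (U i (om m))).
have HOk : forall z x u, Ok z x u -> z *: x = cmx A *m x + cmx B *m u.
  move=> z x u [i [m H]].
  have hw : inW (om m).
    case: (hom m) => h1 h2; split=> //; apply: le_trans h1.
    by rewrite oppr_le0 pi_ge0.
  case: (hsys i) => _ _ _ /(_ (om m) hw) [Hs _].
  case: H => [[-> [-> ->]] | [-> [-> ->]]] //.
  have := congr1 (@mxconj _ _ _) Hs.
  by rewrite /mxconj map_mxZ map_mxD !map_mxM -!/(mxconj _) !conj_cmx.
have HK : forall e' : nat -> 'rV[R[i]]_nu,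
    (forall z x u, Ok z x u -> ev (L + nx) e' z u = 0) ->
    forall p, (p < L + nx)%N -> e' p = 0.
  move=> e' He' p hp.
  pose v : 'rV[R[i]]_((L + nx) * nu) :=
    \row_r e' (mxtens_unindex r).1 0 (mxtens_unindex r).2.
  have blkv : forall l, (l < L + nx)%N -> blk v l = e' l.
    move=> l hl; have -> : l = Ordinal hl by [].
    by rewrite blkE; apply/rowP => k; rewrite !mxE mxtens_indexK.
  have v0 : v = 0.
    have hf : row_free (row_mx (FLblk (L + nx) (fun i m => U i (om m)) om)
                 (mxconj (FLblk (L + nx) (fun i m => U i (om m)) om))).
      by rewrite /row_free hcpe mulnC.
    apply: (row_free_inj hf); rewrite /= mul0mx mul_mx_row -row_mx0; congr row_mx.
      rewrite /FLblk mul_mxrow; apply/mxrowP => i; rewrite mxrowK submxrow0.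
      apply/matrixP => a m; rewrite (ord1 a) FL_mul mxE.
      rewrite -[RHS](He' (e m) (X i (om m)) (U i (om m))); last by exists i, m; left.
      by rewrite /ev big_mkord; apply: eq_bigr => l _; rewrite blkv.
    rewrite /FLblk mxconj_mxrow mul_mxrow; apply/mxrowP => i; rewrite mxrowK submxrow0.
    apply/matrixP => a m; rewrite (ord1 a) FLc_mul mxE.
    rewrite -[RHS](He' ((e m)^*%C) (mxconj (X i (om m))) (mxconj (U i (om m))));
      last by exists i, m; right.
    by rewrite /ev big_mkord; apply: eq_bigr => l _; rewrite blkv.
  by rewrite -blkv // v0 blk0.
have KG : forall w : 'rV[R[i]]_(1 * nx + L * nu), w *m row_mx G (mxconj G) = 0 -> w = 0.
  move=> w hw.
  have Hw := hsubmxK w.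
  set wl := lsubmx w in Hw *; set wr := rsubmx w in Hw *.
  move: hw; rewrite mul_mx_row -row_mx0 => /eq_row_mx [h1 h2].
  rewrite -Hw /G mul_row_col /FLblk !mul_mxrow -mxrowD in h1.
  rewrite -Hw /G /mxconj map_col_mx -!/(mxconj _) !mxconj_mxrow mul_row_col in h2.
  rewrite !mul_mxrow -mxrowD in h2.
  pose xi := blk wl 0; pose eta := blk wr.
  have hker : forall z x u, Ok z x u -> dot xi x + ev L eta z u = 0.
    move=> z x u [i [m [[-> [-> ->]]|[-> [-> ->]]]]].
      have := congr1 (fun M => submxrow M i) h1; rewrite mxrowK submxrow0.
      move=> /matrixP /(_ 0 m); rewrite mxE FL_mul FL_mul big_ord1 expr0 mul1r mxE => <-.
      by rewrite /ev big_mkord.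
    have := congr1 (fun M => submxrow M i) h2; rewrite mxrowK submxrow0.
    move=> /matrixP /(_ 0 m); rewrite mxE FLc_mul FLc_mul big_ord1 expr0 mul1r mxE => <-.
    by rewrite /ev big_mkord.
  have [E1 E2] := core_main HOk HK hL (leqnn _) (fun l hl => blk_out wr hl) hker.
  have xi0 : xi = 0.
    have hf : row_free (cmx (ctrb_mx A B)).
      have -> : cmx (ctrb_mx A B) = map_mx (real_complex R) (ctrb_mx A B) by [].
      by rewrite /row_free mxrank_map hctrb.
    apply: (row_free_inj hf); rewrite mul0mx /ctrb_mx /cmx map_mxrow_RC mul_mxrow.
    apply/mxrowP => k; rewrite mxrowK submxrow0 -/(cmx _) cmxM cmxX mulmxA.
    exact: E2.
  have wl0 : wl = 0.
    apply: blk_eq0 => -[|l]; [exact: xi0 | exact: blk_out].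
  have wr0 : wr = 0 by apply: blk_eq0.
  by rewrite -Hw wl0 wr0 row_mx0.
clearbody G.
split; first by rewrite (rank_of_ker KG) mul1n.
split.
  apply/matrixP => a b; rewrite !mxE -Re_conj; congr complex.Re.
  rewrite rmorph_sum; apply: eq_bigr => k _; rewrite !mxE rmorphM /= conjcK mulrC.
  by [].
move=> x hx.
set y := (cmx x)^T *m G.
have hy : y != 0.
  apply: contraNneq hx => y0.
  have h0 : (cmx x)^T = 0.
    apply: KG; rewrite mul_mx_row -/y y0 -row_mx0; congr row_mx.
    have -> : (cmx x)^T = mxconj (cmx x)^T by rewrite /mxconj -map_trmx -/(mxconj _) conj_cmx.
    by rewrite /mxconj -map_mxM -!/(mxconj _) -/y y0 /mxconj map_mx0.
  apply/eqP/matrixP => i j; rewrite (ord1 j) mxE.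
  have := congr1 (fun M : 'rV_ _ => complex.Re (M 0 i)) h0; rewrite !mxE /=.
  by [].
have Ey : (cmx x)^T *m (G *m ctrmx G) *m cmx x = y *m ctrmx y.
  rewrite /y /ctrmx /mxconj map_mxM trmx_mul map_trmx -!/(mxconj _) conj_cmx /cmx -map_trmx trmxK.
  by rewrite !mulmxA.
rewrite Remx_quad Ey mxE Re_sum.
have [k hk] : exists k, y 0 k != 0.
  apply/existsP; apply: contraNT hy => /existsPn H; apply/eqP/matrixP => a k.
  by rewrite (ord1 a) [RHS]mxE; apply/eqP/negbNE/H.
clearbody y.
have E : forall i, ctrmx y i 0 = (y 0 i)^*%C by move=> i; rewrite !mxE.
rewrite (bigD1 k) //= E Re_mulJJ.
rewrite (eq_bigr (fun i => complex.Re (y 0 i) ^+ 2 + complex.Im (y 0 i) ^+ 2));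
  last by move=> i _; rewrite E Re_mulJJ.
apply: (lt_le_trans (sq_pos hk)); rewrite lerDl; apply: sumr_ge0 => i _.
by rewrite addr_ge0 ?sqr_ge0.
Qed.
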